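(* Let $K$ be a local field of characteristic $p>0$, and let $L$ be any totally ramified and purely inseparable extension of $K$ of degree $p^n$. Let $b$ be an integer with $0<b<p^n$ and $\gcd(b,p)=1$. Then there is an action of $\mathcal{A}(n)$ on $L$ which makes $L$ into an $\mathcal{A}(n)$-Hopf Galois extension of $K$, and which admits an $\mathcal{A}(n)$-scaffold on $L$ with all shift parameters equal to $b$ (i.e. $b_1=\dots=b_n=b$) and with tolerance $\mathfrak{T}=\infty$.
   Context: A local field here is a field complete with respect to a discrete valuation whose residue field has characteristic $p$; $v_K,v_L$ are normalized valuations, $\mathfrak{O}_K$ the valuation ring of $K$, $\mathfrak{P}_L$ the maximal ideal of $\mathfrak{O}_L$. The divided power $K$-Hopf algebra $\mathcal{A}(n)$ is the $K$-vector space with basis $t_0,\dots,t_{p^n-1}$, multiplication $t_it_j=\binom{i+j}{j}t_{i+j}$ if $i+j<p^n$ and $0$ otherwise, $t_0$ the identity, comultiplication $\Delta(t_r)=\sum_{j=0}^r t_j\otimes t_{r-j}$, counit $\epsilon(t_r)=\delta_{0,r}$, antipode $t_r\mapsto(-1)^rt_r$. For a $K$-Hopf algebra $H$, $L$ is an $H$-module algebra if $H$ acts $K$-linearly on $L$ with $h(st)=\mu(\Delta(h)(s\otimes t))$ ($\mu$ the multiplication of $L$) and $h\cdot1=\epsilon(h)1$; $L/K$ is $H$-Hopf Galois if moreover the map $L\otimes_K H\to\mathrm{End}_K(L)$, $(s\otimes h)\mapsto(x\mapsto s\,h(x))$, is bijective. Scaffolds: let $\mathbb{S}_{p^n}=\{0,\dots,p^n-1\}$,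 $s=\sum_{i=1}^n s_{(n-i)}p^{n-i}$ with digits in $\{0,\dots,p-1\}$; for integers $b_1,\dots,b_n$ prime to $p$, $\mathfrak{b}(s)=\sum_i s_{(n-i)}p^{n-i}b_i$ and $\mathfrak{a}(t)\in\mathbb{S}_{p^n}$ ($t\in\mathbb{Z}$) is the unique element with $\mathfrak{b}(\mathfrak{a}(t))\equiv-t\pmod{p^n}$. For a $K$-algebra $A$ of dimension $p^n$ acting $K$-linearly on $L$ (with $[L:K]=p^n$ totally ramified), an $A$-scaffold of tolerance $\infty$ with shift parameters $b_1,\dots,b_n$ consists of (i) $\lambda_t\in L$ ($t\in\mathbb{Z}$) with $v_L(\lambda_t)=t$ and $\lambda_{t_1}\lambda_{t_2}^{-1}\in K$ whenever $t_1\equiv t_2\pmod{p^n}$, and (ii) $\Psi_1,\dots,\Psi_n\in A$ with $\Psi_i\cdot1=0$ such that for each $i,t$ there is $u_{i,t}\in\mathfrak{O}_K^\times$ with $\Psi_i\cdot\lambda_t=u_{i,t}\lambda_{t+p^{n-i}b_i}$ if $\mathfrak{a}(t)_{(n-i)}\ge1$ and $\Psi_i\cdot\lambda_t=0$ if $\mathfrak{a}(t)_{(n-i)}=0$. *)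

(* Defs.v *)
From HB Require Import structures.
From mathcomp Require Import all_boot all_order all_algebra all_field.
Set Implicit Arguments. Unset Strict Implicit. Unset Printing Implicit Defensive.
Import Order.TTheory GRing.Theory Num.Theory.
Local Open Scope ring_scope.

(* A normalized discrete valuation on a field F, given on F^x (the value at 0,
   which is +oo, is irrelevant and never used). *)
Definition normalized_dval (F : fieldType) (v : F -> int) : Prop :=
  [/\ (forall x y : F, x != 0 -> y != 0 -> v (x * y) = v x + v y),
      (forall x y : F, x != 0 -> y != 0 -> x + y != 0 ->
          Num.min (v x) (v y) <= v (x + y))
    & (forall z : int, exists2 x : F, x != 0 & v x = z)].

(* "w has valuation >= M", with v(0) = +oo *)
Definition val_ge (F : fieldType) (v : F -> int) (w : F) (M : int) : Prop :=
  w = 0 \/ M <= v w.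

Definition dval_complete (F : fieldType) (v : F -> int) : Prop :=
  forall u : nat -> F,
    (forall M : int, exists N : nat, forall m k : nat, (N <= m)%N -> (N <= k)%N ->
        val_ge v (u m - u k) M) ->
    exists l : F, forall M : int, exists N : nat, forall m : nat, (N <= m)%N ->
        val_ge v (u m - l) M.

Section DividedPower.
Variables (K : fieldType) (L : fieldExtType K) (N : nat).

(* The divided power Hopf algebra A(n), N = p^n: an element is its coefficient
   vector a on the basis t_0, ..., t_{N-1}, i.e. a = \sum_r a r t_r. *)
Definition adiv := {ffun 'I_N -> K}.

(* t_i t_j = C(i+j, j) t_{i+j} if i + j < N, 0 otherwise, extended bilinearly *)
Definition adiv_mul (a b : adiv) : adiv :=
  [ffun k : 'I_N => \sum_(i < N) \sum_(j < N | (i + j)%N == k)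
                      a i * b j * ('C(i + j, j))%:R].

Definition adiv_one : adiv := [ffun k : 'I_N => ((k : nat) == 0%N)%:R].

Definition adiv_counit (a : adiv) : K :=
  \sum_(r < N | (r : nat) == 0%N) a r.

(* A K-linear action of A(n) on L, determined by the images T r of the basis
   elements t_r in End_K(L). *)
Definition adiv_act (T : 'I_N -> 'End(L)) (a : adiv) : 'End(L) :=
  \sum_(r < N) a r *: T r.

(* L is an A(n)-module algebra:
   - module: (ab).x = a.(b.x), 1.x = x
   - h(st) = mu(Delta(h)(s (x) t)), with Delta(t_r) = \sum_{i+j=r} t_i (x) t_j
   - h.1 = eps(h) 1 *)
Definition adiv_module_algebra (T : 'I_N -> 'End(L)) : Prop :=
  [/\ (forall (a b : adiv) (x : L),
          adiv_act T (adiv_mul a b) x = adiv_act T a (adiv_act T b x)),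
      (forall x : L, adiv_act T adiv_one x = x),
      (forall (a : adiv) (s t : L),
          adiv_act T a (s * t) =
          \sum_(r < N) a r *: (\sum_(i < N) \sum_(j < N | (i + j)%N == r)
                                   T i s * T j t))
    & (forall a : adiv, adiv_act T a 1 = (adiv_counit a)%:A)].

(* Hopf Galois: the map L (x)_K A(n) -> End_K(L), s (x) h |-> (x |-> s h(x)),
   is bijective.  An element of L (x)_K A(n) is written uniquely as
   \sum_r s_r (x) t_r, i.e. as the family s : {ffun 'I_N -> L}. *)
Definition adiv_hopf_galois_map (T : 'I_N -> 'End(L)) (s : {ffun 'I_N -> L})
  : 'End(L) := \sum_(r < N) (amull (s r) \o T r)%VF.

Definition adiv_hopf_galois (T : 'I_N -> 'End(L)) : Prop :=
  adiv_module_algebra T /\ bijective (adiv_hopf_galois_map T).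

End DividedPower.

Definition digit (p k s : nat) : nat := (s %/ p ^ k) %% p.

(* frak b (s) = \sum_{i=1}^n s_(n-i) p^(n-i) b_i ; here i : 'I_n stands for i+1 *)
Definition frak_b (p n : nat) (bs : 'I_n -> int) (s : nat) : int :=
  \sum_(i < n) (digit p (n - i.+1) s)%:Z * (p ^ (n - i.+1))%:Z * bs i.

(* An A-scaffold of tolerance infinity with shift parameters b_1..b_n for the
   action act : A -> End_K(L) (A = coefficient vectors {ffun 'I_(p^n) -> K}).
   frak a (t) is the unique s in S_{p^n} with frak b (s) = -t mod p^n; the
   condition is stated for every such s. *)
Definition scaffold_infty (K : fieldType) (L : fieldExtType K) (p n : nat)
  (vK : K -> int) (vL : L -> int)
  (act : {ffun 'I_(p ^ n) -> K} -> 'End(L)) (bs : 'I_n -> int) : Prop :=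
  (forall i, coprimez (bs i) p%:Z) /\
  exists (lam : int -> L) (Psi : 'I_n -> {ffun 'I_(p ^ n) -> K}),
  [/\ (forall t : int, lam t != 0 /\ vL (lam t) = t),
      (forall t1 t2 : int, (t1 == t2 %[mod (p ^ n)%:Z])%Z ->
          exists c : K, lam t1 * (lam t2)^-1 = c%:A),
      (forall i : 'I_n, act (Psi i) 1 = 0)
    & (forall (i : 'I_n) (t : int), exists u : K,
         [/\ u != 0, vK u = 0 &
          forall s : nat, (s < p ^ n)%N ->
            (frak_b p bs s == - t %[mod (p ^ n)%:Z])%Z ->
            if (1 <= digit p (n - i.+1) s)%N
            then act (Psi i) (lam t) = u%:A * lam (t + (p ^ (n - i.+1))%:Z * bs i)
            else act (Psi i) (lam t) = 0])].
Arguments scaffold_infty {K L} p n vK vL act bs.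

(* Main.v *)
Require Import Defs.
From HB Require Import structures.
From mathcomp Require Import all_boot all_order all_algebra all_field.
From mathcomp Require Import ring zify.
Import Order.TTheory GRing.Theory Num.Theory.
Local Open Scope ring_scope.

Set Implicit Arguments. Unset Strict Implicit. Unset Printing Implicit Defensive.


Section Binom.
Variable (R : comNzRingType).

Lemma coefX1n (m i : nat) : (('X + 1 : {poly R}) ^+ m)`_i = ('C(m, i))%:R.
Proof.
rewrite exprD1n coef_sum.
under eq_bigr do rewrite coefMn coefXn.
case: (ltnP i m.+1) => him.
  rewrite (bigD1 (Ordinal him)) //= eqxx mulr1n big1 ?addr0 // => k /negPf.
  by rewrite -val_eqE /= eq_sym => ->; rewrite mul0rn.
rewrite bin_small // big1 // => k _.
have : i != k by apply/eqP => e; move: (ltn_ord k); rewrite -e ltnNge him.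
by move/negPf => ->; rewrite mul0rn.
Qed.

Variable p : nat.
Hypothesis hp : p \in [pchar R].

Lemma pnat_pchar_poly m : [pchar {poly R}].-nat (p ^ m)%N.
Proof.
have hp' : p \in [pchar {poly R}] by rewrite pchar_poly.
rewrite (eq_pnat _ (pcharf_eq hp')).
by rewrite pnatX pnat_id // (pcharf_prime hp).
Qed.

Lemma X1_pow m : ('X + 1 : {poly R}) ^+ (p ^ m)%N = 'X^(p ^ m)%N + 1.
Proof. by rewrite exprDn_pchar ?pnat_pchar_poly // expr1n. Qed.

Lemma binK_pchar m a r : (r < p ^ m)%N%N -> ('C(a + p ^ m, r))%:R = ('C(a, r))%:R :> R.
Proof.
move=> hr; rewrite -!coefX1n exprD X1_pow mulrDr mulr1 coefD coefMXn hr add0r //.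
Qed.

Lemma binom_aux (Z : {poly R}) q : exists Q, (Z + 1) ^+ q = 1 + q%:R * Z + Z ^+ 2 * Q.
Proof.
elim: q => [|q [Q IH]]; first by exists 0; rewrite expr0 mul0r mulr0 !addr0.
exists (q%:R + Q * Z + Q); rewrite exprS IH mulrS; ring.
Qed.

Lemma bin_lucas_digit m j : ('C(j, p ^ m)%N)%:R = ((j %/ p ^ m)%N%N)%:R :> R.
Proof.
have pm0 : (0 < p ^ m)%N%N by rewrite expn_gt0 prime_gt0 // (pcharf_prime hp).
rewrite -coefX1n {1}(divn_eq j (p ^ m)%N) exprD mulnC exprM X1_pow.
have [Q ->] := binom_aux ('X^(p ^ m)%N) (j %/ p ^ m)%N.
set q := (j %/ p ^ m)%N%N; set P := ('X + 1) ^+ (j %% p ^ m)%N.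
have -> : (1 + q%:R * 'X^(p ^ m)%N + 'X^(p ^ m)%N ^+ 2 * Q) * P =
          P + (q%:R + 'X^(p ^ m)%N * Q) * P * 'X^(p ^ m)%N by rewrite expr2; ring.
rewrite coefD coefMXn ltnn subnn coef0M coefD coefXnM pm0 addr0 coefX1n bin_small ?ltn_pmod //.
rewrite coefX1n bin0 mulr1 add0r.
by rewrite -polyC_natr coefC.
Qed.
End Binom.


Lemma big_ord_eqc (V : nmodType) (N m : nat) (F : nat -> V) :
  \sum_(k < N | m == k) F k = if (m < N)%N then F m else 0.
Proof.
case: ltnP => h.
  by rewrite (big_pred1 (Ordinal h)) // => k /=.
rewrite big_pred0 // => k; apply/negP => /eqP e.
by move: (ltn_ord k); rewrite -e ltnNge h.
Qed.

Lemma big_ord_sumc (V : nmodType) (N i r : nat) (F : nat -> V) : (r < N)%N ->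
  \sum_(j < N | (i + j)%N == r) F j = if (i <= r)%N then F (r - i)%N else 0.
Proof.
move=> hr; case: leqP => h.
  have h2 : (r - i < N)%N by apply: leq_ltn_trans (leq_subr _ _) hr.
  rewrite (big_pred1 (Ordinal h2)) // => k /=.
  rewrite -val_eqE /=; apply/eqP/eqP => [<-|->]; first by rewrite addKn.
  by rewrite subnKC.
rewrite big_pred0 // => k; apply/negP => /eqP e.
by move: h; rewrite -e ltnNge leq_addr.
Qed.

Lemma bin_comp (m i j : nat) :
  ('C(m, j) * 'C(m - j, i) = 'C(i + j, j) * 'C(m, i + j))%N.
Proof.
case: (leqP (i + j) m) => h; last first.
  rewrite (bin_small h) muln0.
  case: (leqP j m) => hj; last by rewrite bin_small.
  by rewrite (@bin_small (m - j)) ?muln0 // ltn_subLR // addnC.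
have hj : (j <= m)%N by apply: leq_trans h; rewrite leq_addl.
have hi : (i <= m - j)%N by rewrite leq_subRL // addnC.
apply/eqP; rewrite -(@eqn_pmul2r (j`! * i`! * (m - (i + j))`!)) ?muln_gt0 ?fact_gt0 //.
apply/eqP.
have e1 := bin_fact hj. have e2 := bin_fact hi.
have e3 := bin_fact (leq_addl i j). have e4 := bin_fact h.
rewrite subnDA in e4 *. rewrite addnK in e3.
rewrite -subnDA addnC subnDA in e4 *.
transitivity (m`!); first by rewrite -e1 -e2; ring.
by rewrite -[in LHS]e4 [(j + i)%N]addnC -e3; ring.
Qed.


Section Constr.
Variables (K : fieldType) (L : fieldExtType K) (p n : nat) (y : L) (c : K).
Hypothesis hp : p \in [pchar K].
Let N := (p ^ n)%N.
Hypothesis yN : y ^+ N = c%:A.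
Let X := [tuple y ^+ (i : nat) | i < N].
Hypothesis Xb : basis_of fullv X.

Lemma hpL : p \in [pchar L].
Proof. by rewrite pchar_lalg. Qed.

Lemma N_gt0 : (0 < N)%N.
Proof. by rewrite expn_gt0 prime_gt0 // (pcharf_prime hp). Qed.

Lemma XE (i : 'I_N) : X`_i = y ^+ i.
Proof. by rewrite -tnth_nth tnth_mktuple. Qed.

Lemma zE z : z = \sum_(i < N) coord X i z *: y ^+ i.
Proof.
rewrite {1}(coord_basis Xb (memvf z)); apply: eq_bigr => i _; by rewrite XE.
Qed.

Lemma coordX (i j : 'I_N) : coord X j (y ^+ i) = (i == j)%:R.
Proof. by rewrite -XE coord_free // (basis_free Xb). Qed.

Lemma End_eq (f g : 'End(L)) :
  (forall i : 'I_N, f (y ^+ i) = g (y ^+ i)) -> f = g.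
Proof.
move=> H; apply/lfunP => z; rewrite (zE z) !linear_sum; apply: eq_bigr => i _.
by rewrite !linearZ /= H.
Qed.

Definition Tfun (r : nat) (z : L) : L :=
  \sum_(i < N) coord X i z *: (y ^+ (i - r) *+ 'C(i, r)).

Lemma Tfun_lin r : linear (Tfun r).
Proof.
move=> a u v; rewrite /Tfun scaler_sumr -big_split; apply: eq_bigr => i _.
by rewrite linearP /= scalerDl scalerA.
Qed.

HB.instance Definition _ r := GRing.isLinear.Build K L L *:%R (Tfun r) (Tfun_lin r).

Definition Tn (r : nat) : 'End(L) := linfun (Tfun r).

Lemma TnE r z : Tn r z = Tfun r z.
Proof. by rewrite lfunE. Qed.

Lemma Tbasis r (i : 'I_N) : Tn r (y ^+ i) = y ^+ (i - r) *+ 'C(i, r).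
Proof.
rewrite TnE /Tfun (bigD1 i) //= coordX eqxx scale1r big1 ?addr0 // => j hj.
by rewrite coordX eq_sym (negPf hj) scale0r.
Qed.

Lemma Tgen r m : (r < N)%N -> Tn r (y ^+ m) = y ^+ (m - r) *+ 'C(m, r).
Proof.
move=> hr; elim: m {-2}m (leqnn m) => [|M IH] m hm.
  move: hm; rewrite leqn0 => /eqP ->.
  exact: (Tbasis r (Ordinal N_gt0)).
case: (ltnP m N) => hmN; first exact: (Tbasis r (Ordinal hmN)).
have e : y ^+ m = c *: y ^+ (m - N).
  by rewrite -{1}(subnKC hmN) exprD yN mulr_algl.
have hmN' : (m - N <= M)%N.
  by rewrite leq_subLR; apply: leq_trans hm _; rewrite -addn1 addnC leq_add2r N_gt0.
have hb : ('C(m, r))%:R = ('C(m - N, r))%:R :> L.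
  by rewrite -{1}(subnK hmN) (binK_pchar hpL).
rewrite e linearZ /= IH // -[_ *+ 'C(m, r)]mulr_natr -[_ *+ 'C(m - N, r)]mulr_natr hb scalerAl.
case: (leqP r (m - N)) => hrm.
  congr (_ * _); rewrite -mulr_algl -yN -exprD; congr (_ ^+ _).
  lia.
by rewrite bin_small // !mulr0.
Qed.

Lemma Tcomp (i j : 'I_N) x :
  Tn i (Tn j x) = \sum_(k < N | (i + j)%N == k) ('C(i + j, j))%:R *: Tn k x.
Proof.
have E : (Tn i \o Tn j)%VF = \sum_(k < N | (i + j)%N == k) ('C(i + j, j))%:R *: Tn k.
  apply: End_eq => m; rewrite comp_lfunE sum_lfunE Tbasis raddfMn /= (Tgen _ (ltn_ord i)).
  under eq_bigr => k _ do rewrite scale_lfunE (Tgen _ (ltn_ord k)).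
  rewrite (big_ord_eqc _ _ (fun k => ('C(i + j, j))%:R *: (y ^+ (m - k) *+ 'C(m, k)))).
  rewrite -mulrnA mulnC bin_comp.
  case: ltnP => h.
    by rewrite scaler_nat -mulrnA mulnC subnAC subnDA.
  by rewrite (@bin_small m) ?muln0 // (leq_trans (ltn_ord m) h).
by rewrite -comp_lfunE E sum_lfunE; apply: eq_bigr => k _; rewrite scale_lfunE.
Qed.

Lemma T0 x : Tn 0 x = x.
Proof.
have E : Tn 0 = \1%VF by apply: End_eq => m; rewrite Tbasis id_lfunE subn0 bin0.
by rewrite E id_lfunE.
Qed.

Lemma T1 r : Tn r 1 = (r == 0)%:R.
Proof.
have := Tbasis r (Ordinal N_gt0); rewrite /= expr0 => ->.
by rewrite bin0n.
Qed.

Lemma amulrE (u x : L) : amulr u x = x * u.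
Proof. by rewrite lfunE. Qed.

Lemma amullE (u x : L) : amull u x = u * x.
Proof. by rewrite lfunE. Qed.

Lemma Tleib_base (r a b : 'I_N) :
  Tn r (y ^+ a * y ^+ b) =
  \sum_(i < N) \sum_(j < N | (i + j)%N == r) Tn i (y ^+ a) * Tn j (y ^+ b).
Proof.
rewrite -exprD (Tgen _ (ltn_ord r)).
under eq_bigr => i _ do rewrite (@big_ord_sumc _ N i r (fun j => Tn i (y ^+ a) * Tn j (y ^+ b)) (ltn_ord r)).
rewrite -big_mkcond /= -(big_ord_widen _ (fun i => Tn i (y ^+ a) * Tn (r - i)%N (y ^+ b)) (ltn_ord r)).
under eq_bigr => i _ do rewrite (Tgen _ (leq_ltn_trans (leq_subr _ _) (ltn_ord r)))
   (Tgen _ (leq_trans (ltn_ord i) (ltn_ord r))) mulrnAl mulrnAr -mulrnA.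
rewrite (eq_bigr (fun i : 'I_r.+1 => y ^+ (a + b - r) *+ ('C(a, i) * 'C(b, r - i)))); last first.
  move=> i _; rewrite mulnC; case: (leqP i a) => hi.
    2: by rewrite (@bin_small a) ?mul0n ?mulr0n.
  case: (leqP (r - i) b) => hj; last by rewrite (@bin_small b) ?muln0 ?mulr0n.
  by rewrite -exprD; congr (_ ^+ _ *+ _); move: (ltn_ord i); lia.
by rewrite sumrMnr binomial.Vandermonde.
Qed.

Lemma Tleib (r : 'I_N) s t :
  Tn r (s * t) = \sum_(i < N) \sum_(j < N | (i + j)%N == r) Tn i s * Tn j t.
Proof.
have step1 : forall (b : 'I_N) s',
    Tn r (s' * y ^+ b) = \sum_(i < N) \sum_(j < N | (i + j)%N == r) Tn i s' * Tn j (y ^+ b).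
  move=> b s'.
  have E : (Tn r \o amulr (y ^+ b))%VF = \sum_(i < N) \sum_(j < N | (i + j)%N == r)
                (amulr (Tn j (y ^+ b)) \o Tn i)%VF.
    apply: End_eq => a; rewrite comp_lfunE amulrE Tleib_base sum_lfunE; apply: eq_bigr => i _.
    by rewrite sum_lfunE; apply: eq_bigr => j _; rewrite comp_lfunE amulrE.
  have := congr1 (fun f : 'End(L) => f s') E.
  rewrite /= comp_lfunE amulrE sum_lfunE => ->; apply: eq_bigr => i _.
  by rewrite sum_lfunE; apply: eq_bigr => j _; rewrite comp_lfunE amulrE.
have E : (Tn r \o amull s)%VF = \sum_(i < N) \sum_(j < N | (i + j)%N == r)
              (amull (Tn i s) \o Tn j)%VF.
  apply: End_eq => b; rewrite comp_lfunE amullE step1 sum_lfunE; apply: eq_bigr => i _.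
  by rewrite sum_lfunE; apply: eq_bigr => j _; rewrite comp_lfunE amullE.
have := congr1 (fun f : 'End(L) => f t) E.
rewrite /= comp_lfunE amullE sum_lfunE => ->; apply: eq_bigr => i _.
by rewrite sum_lfunE; apply: eq_bigr => j _; rewrite comp_lfunE amullE.
Qed.

Definition T (r : 'I_N) : 'End(L) := Tn r.

Lemma swap3 (V : nmodType) (F : 'I_N -> 'I_N -> 'I_N -> V) :
  \sum_(k < N) \sum_(i < N) \sum_(j < N | (i + j)%N == k) F i j k =
  \sum_(i < N) \sum_(j < N) \sum_(k < N | (i + j)%N == k) F i j k.
Proof.
rewrite exchange_big; apply: eq_bigr => i _ /=.
by rewrite (exchange_big_dep xpredT).
Qed.

Lemma adiv_actE (U : 'I_N -> 'End(L)) (a : adiv K N) x :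
  adiv_act U a x = \sum_(r < N) a r *: U r x.
Proof. by rewrite /adiv_act sum_lfunE; apply: eq_bigr => r _; rewrite scale_lfunE. Qed.

Lemma T_module : adiv_module_algebra T.
Proof.
split.
- move=> a b x.
  have -> : adiv_act T b x = \sum_(r < N) b r *: T r x by apply: adiv_actE.
  rewrite !adiv_actE /adiv_mul.
  transitivity (\sum_(k < N) \sum_(i < N) \sum_(j < N | (i + j)%N == k)
                  (a i * b j * ('C(i + j, j))%:R) *: T k x).
    apply: eq_bigr => k _; rewrite ffunE scaler_suml.
    by apply: eq_bigr => i _; rewrite scaler_suml.
  rewrite swap3; apply: eq_bigr => i _.
  rewrite linear_sum scaler_sumr; apply: eq_bigr => j _.
  rewrite linearZ /= /T Tcomp !scaler_sumr; apply: eq_bigr => k _.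
  by rewrite !scalerA mulrA.
- move=> x; rewrite adiv_actE (bigD1 (Ordinal N_gt0)) //= big1 => [|k hk].
    by rewrite ffunE eqxx scale1r /T T0 addr0.
  rewrite ffunE.
  have -> : ((k : nat) == 0%N) = false.
    by apply/negP => /eqP e; move: hk; rewrite -val_eqE /= e eqxx.
  by rewrite scale0r.
- move=> a s t; rewrite adiv_actE; apply: eq_bigr => r _.
  by rewrite /T Tleib.
- move=> a; rewrite adiv_actE /adiv_counit scaler_suml [RHS]big_mkcond /=.
  apply: eq_bigr => r _; rewrite /T T1.
  by case: (_ == _); rewrite ?scaler0.
Qed.

Definition HG := adiv_hopf_galois_map T.

Lemma HG_lin : linear HG.
Proof.
move=> k s s'; rewrite /HG /adiv_hopf_galois_map scaler_sumr -big_split.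
apply: eq_bigr => r _; rewrite !ffunE linearP /= comp_lfunDl comp_lfunZl //.
Qed.

HB.instance Definition _ := GRing.isLinear.Build K {ffun 'I_N -> L} 'End(L) *:%R HG HG_lin.

Lemma HG_ker s : HG s = 0 -> s = 0.
Proof.
move=> h0.
have H : forall m : 'I_N, \sum_(k < N) s k * (y ^+ (m - k) *+ 'C(m, k)) = 0.
  move=> m; transitivity (HG s (y ^+ m)); last by rewrite h0 zero_lfunE.
  rewrite /HG /adiv_hopf_galois_map sum_lfunE.
  by apply: eq_bigr => k _; rewrite comp_lfunE amullE /T Tbasis.
suff S : forall m (k : 'I_N), (k < m)%N -> s k = 0.
  by apply/ffunP => k; rewrite ffunE (S k.+1).
elim=> [//|m IH] k hk.
case: (ltnP k m) => hkm; first exact: IH.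
have ekm : (k : nat) = m by apply/eqP; rewrite eqn_leq hkm -ltnS hk.
have := H k; rewrite (bigD1 k) //= big1 => [|k' hk'].
  by rewrite subnn binn expr0 mulr1 addr0.
case: (ltnP k' k) => h.
  by rewrite IH ?mul0r // -ekm.
rewrite bin_small ?mulr0n ?mulr0 //.
by rewrite ltn_neqAle h andbT; apply/negP => /eqP e; move: hk'; rewrite -val_eqE /= e eqxx.
Qed.

Lemma T_hopf_galois : adiv_hopf_galois T.
Proof.
split; first exact: T_module.
pose Phi : 'Hom({ffun 'I_N -> L}, 'End(L)) := linfun HG.
have PhiE : forall s, Phi s = HG s by move=> s; rewrite lfunE.
have ker0 : lker Phi == 0%VS.
  apply/lker0P => s1 s2; rewrite !PhiE => e.
  apply/eqP; rewrite -subr_eq0; apply/eqP; apply: HG_ker.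
  by rewrite raddfB /= e subrr.
have img : limg Phi = fullv.
  apply/eqP; rewrite eqEdim subvf /= limg_dim_eq; last by rewrite (eqP ker0) capv0.
  rewrite !dimvf.
  change (dim L * dim L <= #|'I_N| * dim L)%N.
  by rewrite card_ord -dimvf (size_basis Xb).
apply: (@Bijective _ _ _ (Phi^-1)%VF) => [s|g].
  by rewrite -/HG -PhiE lker0_lfunK.
by rewrite -/HG -PhiE limg_lfunVK // img memvf.
Qed.
End Constr.


Section Val.
Variables (F : fieldType) (v : F -> int).
Hypothesis hv : normalized_dval v.

Lemma vM x y : x != 0 -> y != 0 -> v (x * y) = v x + v y.
Proof. by case: hv => h _ _; apply: h. Qed.

Lemma v1 : v 1 = 0.
Proof.
have h1 : (1 : F) != 0 := oner_neq0 F.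
by have := vM h1 h1; rewrite mulr1 -{1}[v 1]addr0 => /addrI <-.
Qed.

Lemma vN1 : v (-1) = 0.
Proof.
have h : (-1 : F) != 0 by rewrite oppr_eq0 oner_eq0.
have := vM h h; rewrite mulrNN mulr1 v1; lia.
Qed.

Lemma vN x : x != 0 -> v (- x) = v x.
Proof.
move=> hx; have h : (-1 : F) != 0 by rewrite oppr_eq0 oner_eq0.
by rewrite -mulN1r vM // vN1 add0r.
Qed.

Lemma vX x k : x != 0 -> v (x ^+ k) = v x *+ k.
Proof.
move=> hx; elim: k => [|k IH]; first by rewrite expr0 v1.
by rewrite exprS vM ?expf_neq0 // IH mulrS.
Qed.

Lemma vV x : x != 0 -> v x^-1 = - v x.
Proof.
move=> hx; have := vM hx (invr_neq0 hx); rewrite divff // v1; lia.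
Qed.

Lemma vexpz x (z : int) : x != 0 -> v (x ^ z) = v x * z.
Proof.
move=> hx; case: z => k /=.
  by rewrite vX // pmulrn mulrzz.
rewrite vV ?expf_neq0 // vX // pmulrn mulrzz NegzE mulrN //.
Qed.

Lemma vstrict x y : x != 0 -> y != 0 -> v x < v y -> x + y != 0 /\ v (x + y) = v x.
Proof.
move=> hx hy hlt.
have hxy : x + y != 0.
  apply/negP => /eqP e; have ey : y = - x by rewrite -(addKr x y) e addr0.
  by move: hlt; rewrite ey vN // ltxx.
split=> //.
case: hv => _ hu _.
have h1 := hu _ _ hx hy hxy.
have hny : - y != 0 by rewrite oppr_eq0.
have h2 := hu _ _ hxy hny; rewrite addrK vN // in h2.
move: h1 (h2 hx); rewrite !ge_min => /orP[h1|h1] /orP[h3|h3].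
- by apply/eqP; rewrite eq_le h3 h1.
- by move: (lt_le_trans hlt h3); rewrite ltxx.
- by move: (lt_le_trans hlt (le_trans h1 h3)); rewrite ltxx.
- by move: (lt_le_trans hlt h3); rewrite ltxx.
Qed.

Lemma vsum (I : eqType) (s : seq I) (f : I -> F) :
  uniq s -> s != [::] -> {in s, forall i, f i != 0} ->
  {in s &, forall i j, i != j -> v (f i) != v (f j)} ->
  (\sum_(i <- s) f i != 0) /\ exists2 i, i \in s & v (\sum_(i <- s) f i) = v (f i).
Proof.
elim: s => [//|a s IH] /= /andP[has us] _ hnz hdist.
case: s IH has us hnz hdist => [|a' s'] IH has us hnz hdist.
  rewrite big_seq1; split; first by apply: hnz; rewrite mem_seq1.
  by exists a; rewrite ?mem_seq1.
have hnz' : {in a' :: s', forall i, f i != 0}.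
  by move=> i hi; apply: hnz; rewrite inE hi orbT.
have hdist' : {in a' :: s' &, forall i j, i != j -> v (f i) != v (f j)}.
  by move=> i j hi hj; apply: hdist; rewrite inE ?hi ?hj orbT.
have [S0 [i hi vS]] := IH us isT hnz' hdist'.
set S := \sum_(i <- a' :: s') f i in S0 vS *.
have ha : f a != 0 by apply: hnz; rewrite inE eqxx.
have hai : a != i by apply/negP => /eqP e; move: has; rewrite e hi.
have hne : v (f a) != v S.
  rewrite vS; apply: hdist => //; rewrite inE ?eqxx ?hi ?orbT //.
rewrite big_cons; case: (ltgtP (v (f a)) (v S)) hne => // hlt _.
  have [h1 h2] := vstrict ha S0 hlt; split=> //; exists a; rewrite ?inE ?eqxx //.
have [h1 h2] := vstrict S0 ha hlt; rewrite [f a + _]addrC; split=> //.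
by exists i; [rewrite inE hi orbT | rewrite h2].
Qed.
End Val.




Lemma digits_sum (p n s : nat) : (1 < p)%N ->
  (\sum_(i < n) digit p i s * p ^ i = s %% p ^ n)%N.
Proof.
move=> hp1; elim: n => [|n IH]; first by rewrite big_ord0 expn0 modn1.
rewrite big_ord_recr /= IH /digit.
set q := (s %/ p ^ n)%N; set r := (s %% p ^ n)%N.
have hP : (0 < p ^ n)%N by rewrite expn_gt0; lia.
have hr : (r < p ^ n)%N by rewrite ltn_pmod.
have hq : (q %% p < p)%N by rewrite ltn_pmod //; lia.
have es : s = (q %/ p * p ^ n.+1 + (r + q %% p * p ^ n))%N.
  rewrite {1}(divn_eq s (p ^ n)) -/q -/r {1}(divn_eq q p) expnS; ring.
have hb : (r + q %% p * p ^ n < p ^ n.+1)%N.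
  have : (q %% p * p ^ n <= (p - 1) * p ^ n)%N by rewrite leq_mul2r; lia.
  rewrite expnS; nia.
by rewrite [in RHS]es modnMDl (modn_small hb).
Qed.

Lemma dvd_small (N : nat) (b : int) (j j' : nat) : coprimez b N%:Z ->
  (j < N)%N -> (j' < N)%N -> (N%:Z %| b * (j%:Z - j'%:Z))%Z -> j = j'.
Proof.
move=> hc hj hj'; rewrite Gauss_dvdzr; last by rewrite coprimez_sym.
case/dvdzP => q hq.
have : q = 0 by nia.
move=> q0; rewrite q0 mul0r in hq; lia.
Qed.

Lemma XsubC_pchar (L : comNzRingType) (y : L) e : [pchar L].-nat e ->
  ('X - y%:P) ^+ e = 'X^e - (y ^+ e)%:P.
Proof.
move=> he; have he' : [pchar {poly L}].-nat e by rewrite (eq_pnat _ (@pchar_poly L)).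
by rewrite exprDn_pchar // exprNn_pchar // rmorphXn.
Qed.


Lemma exists_yN (K : fieldType) (L : fieldExtType K) (p n : nat) (y : L) :
  p \in [pchar K] -> purely_inseparable 1%VS {:L} -> \dim {:L} = (p ^ n)%N ->
  basis_of fullv [tuple y ^+ (i : nat) | i < (p ^ n)%N] ->
  exists c : K, y ^+ (p ^ n) = c%:A.
Proof.
move=> hp hins hdim Xb.
have hpL : p \in [pchar L] by rewrite pchar_lalg.
have [e he yeK] : exists2 e, [pchar L].-nat e & y ^+ e \in 1%VS.
  apply/purely_inseparable_elementP_pchar.
  by move/purely_inseparableP: hins; apply; rewrite memvf.
have dvd : minPoly 1 y %| ('X - y%:P) ^+ e.
  rewrite XsubC_pchar //; apply: minPoly_dvdp; first by rewrite polyOverXnsubC.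
  by rewrite rootE !hornerE subrr.
case/dvdp_exp_XsubCP: dvd => m hm eqm.
have E : minPoly 1 y = ('X - y%:P) ^+ m.
  by apply/eqP; rewrite -eqp_monic ?monic_minPoly ?monic_exp ?monicXsubC.
have sz : size (minPoly 1 y) = (p ^ n).+1.
  rewrite size_minPoly adjoin_degreeE dimv1 divn1.
  have sub : (span [tuple (y ^+ (i : nat))%R | i < (p ^ n)%N] <= <<1; y>>)%VS.
    apply/span_subvP => z /mapP [i _ ->].
    by apply: rpredX; apply: memv_adjoin.
  rewrite (span_basis Xb) in sub.
  apply/eqP; rewrite eqn_leq -hdim; apply/andP; split; first exact: dimvS (subvf _).
  exact: dimvS sub.
have mN : m = (p ^ n)%N.
  by move: sz; rewrite E size_exp_XsubC => -[].
have hN : [pchar L].-nat (p ^ n)%N.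
  by rewrite (eq_pnat _ (pcharf_eq hpL)) pnatX pnat_id // (pcharf_prime hp).
have := polyOverP (minPolyOver 1 y) 0.
have hN0 : (0 == (p ^ n)%N) = false.
  by apply/negbTE; rewrite eq_sym -lt0n expn_gt0 prime_gt0 // (pcharf_prime hp).
rewrite E mN XsubC_pchar // coefB coefXn coefC /= hN0 sub0r rpredN.
case/vlineP => k hk; exists k; exact: hk.
Qed.

Lemma y_free (K : fieldType) (L : fieldExtType K) (p n : nat) (vK : K -> int) (vL : L -> int)
    (b : int) (y : L) :
  normalized_dval vL -> (forall x : K, x != 0 -> vL x%:A = (p ^ n)%:Z * vK x) ->
  y != 0 -> vL y = - b -> coprimez b (p ^ n)%N%:Z ->
  free [tuple y ^+ (i : nat) | i < (p ^ n)%N].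
Proof.
move=> hvL hKL hy0 hvy hcop.
set N := (p ^ n)%N.
apply/freeP => k hk i; apply/eqP/negP => /negP hki.
pose P := fun j : 'I_N => k j != 0.
pose s := [seq j <- index_enum 'I_N | P j].
pose f := fun j : 'I_N => k j *: y ^+ j.
have e0 : \sum_(j <- s) f j = 0.
  rewrite big_filter big_mkcond -[RHS]hk; apply: eq_bigr => j _.
  rewrite /f -tnth_nth tnth_mktuple /P.
  by case: (boolP (k j != 0)) => // /negPn /eqP ->; rewrite scale0r.
have fE : forall j : 'I_N, P j -> f j != 0 /\ vL (f j) = N%:Z * vK (k j) + (- b) *+ j.
  move=> j hj0; have hj : k j != 0 := hj0; rewrite /f -mulr_algl; split.
    by rewrite mulf_neq0 ?expf_neq0 // scaler_eq0 negb_or hj oner_neq0.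
  by rewrite vM // ?hKL ?vX ?hvy // ?expf_neq0 // scaler_eq0 negb_or hj oner_neq0.
have [] := vsum hvL (s := s) (f := f).
- by rewrite filter_uniq // index_enum_uniq.
- apply/negP => /eqP s0.
  have : i \in s by rewrite mem_filter /P hki mem_index_enum.
  by rewrite s0.
- by move=> j; rewrite mem_filter => /andP[hj _]; case: (fE j hj).
- move=> j j' ; rewrite !mem_filter => /andP[hj _] /andP[hj' _] hne.
  apply/negP => /eqP e; move: hne; rewrite (fE j hj).2 (fE j' hj').2 in e.
  have hd : (N%:Z %| b * (j%:Z - j'%:Z))%Z.
    apply/dvdzP; exists (vK (k j) - vK (k j')).
    rewrite !pmulrn !mulrzz in e; lia.
  by rewrite -val_eqE /= (dvd_small hcop (ltn_ord j) (ltn_ord j') hd) eqxx.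
by rewrite e0 eqxx.
Qed.


Lemma vK_nat (K : fieldType) (vK : K -> int) (p d : nat) :
  p \in [pchar K] -> normalized_dval vK -> (d%:R : K) != 0 -> vK d%:R = 0.
Proof.
move=> hp hv hx.
have h := vX hv p hx.
rewrite -Frobenius_autE (pFrobenius_aut_nat hp) in h.
have {}h : vK d%:R * p%:Z = vK d%:R by rewrite {2}h -mulrzz -pmulrn.
have p1 : (1 < p)%N by apply: prime_gt1; apply: (pcharf_prime hp).
move/eqP: h; rewrite eq_sym -subr_eq0 -{1}[vK d%:R]mulr1 -mulrBr mulf_eq0 => /orP[/eqP //|].
rewrite subr_eq0 => /eqP; lia.
Qed.

Section Scaf.
Variables (K : fieldType) (L : fieldExtType K) (p n : nat) (vK : K -> int) (vL : L -> int)
  (b : int) (y : L) (c : K) (pi : K) (u : int).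
Hypotheses (hp : p \in [pchar K]) (hvK : normalized_dval vK) (hvL : normalized_dval vL)
  (hKL : forall x : K, x != 0 -> vL x%:A = (p ^ n)%:Z * vK x)
  (yN : y ^+ (p ^ n) = c%:A)
  (Xb : basis_of fullv [tuple y ^+ (i : nat) | i < (p ^ n)%N])
  (hy0 : y != 0) (hvy : vL y = - b) (hpi0 : pi != 0) (hvpi : vK pi = 1)
  (hcp : coprimez b p%:Z) (hcop : coprimez b (p ^ n)%N%:Z)
  (hu : ((p ^ n)%N%:Z %| u * b - 1)%Z).

Let N := (p ^ n)%N.
Let Nz : int := N%:Z.

Lemma Nz_gt0 : 0 < Nz.
Proof. by rewrite ltz_nat expn_gt0 prime_gt0 // (pcharf_prime hp). Qed.

Lemma Nz_neq0 : Nz != 0.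
Proof. by rewrite gt_eqF // Nz_gt0. Qed.

Definition jz (t : int) : int := ((- t * u) %% Nz)%Z.
Definition jf (t : int) : nat := `|jz t|%N.
Definition kf (t : int) : int := ((t + b * jz t) %/ Nz)%Z.
Definition lam (t : int) : L := y ^+ jf t * (pi ^ kf t)%:A.

Lemma jz_ge0 t : 0 <= jz t.
Proof. exact: modz_ge0 Nz_neq0. Qed.

Lemma jfE t : (jf t)%:Z = jz t.
Proof. by rewrite /jf gez0_abs // jz_ge0. Qed.

Lemma jf_lt t : (jf t < N)%N.
Proof. by rewrite -ltz_nat jfE /jz ltz_pmod // Nz_gt0. Qed.

Lemma dvd_jz t : (Nz %| t + b * jz t)%Z.
Proof.
have e1 := divz_eq (- t * u) Nz.
set q := ((- t * u) %/ Nz)%Z in e1.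
have em : jz t = - t * u - q * Nz by rewrite /jz {2}e1; ring.
case/dvdzP: hu => r hr.
have hub : u * b = r * Nz + 1 by rewrite -hr; ring.
apply/dvdzP; exists (- t * r - b * q); rewrite em.
transitivity (t - t * (u * b) - b * q * Nz); first ring.
by rewrite hub; ring.
Qed.

Lemma jf_char t (j : nat) : (j < N)%N -> (Nz %| t + b * j%:Z)%Z -> jf t = j.
Proof.
move=> hj hd.
apply: (dvd_small hcop (jf_lt t) hj).
have -> : b * ((jf t)%:Z - j%:Z) = (t + b * jz t) - (t + b * j%:Z) by rewrite jfE; ring.
by rewrite rpredB // dvd_jz.
Qed.

Lemma lam_eq t : t + b * (jf t)%:Z = Nz * kf t.
Proof. by rewrite jfE /kf [Nz * _]mulrC divzK // dvd_jz. Qed.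

Lemma lam_char t (j : nat) (k : int) : (j < N)%N -> t + b * j%:Z = Nz * k ->
  lam t = y ^+ j * (pi ^ k)%:A.
Proof.
move=> hj he.
have hjf : jf t = j by apply: jf_char hj _; apply/dvdzP; exists k; rewrite he mulrC.
have hkf : kf t = k.
  have := lam_eq t; rewrite hjf he => /eqP; rewrite (inj_eq (mulfI Nz_neq0)) => /eqP //.
by rewrite /lam hjf hkf.
Qed.

Lemma lam_nz t : lam t != 0.
Proof.
rewrite /lam mulf_neq0 ?expf_neq0 // -in_algE fmorph_eq0 expfz_neq0 //.
Qed.

Lemma vL_lam t : vL (lam t) = t.
Proof.
have hk : pi ^ kf t != 0 by rewrite expfz_neq0.
rewrite /lam vM // ?expf_neq0 //; last by rewrite -in_algE fmorph_eq0.
rewrite vX // hKL // vexpz // hvpi mul1r hvy.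
have := lam_eq t; rewrite pmulrn mulrzz; lia.
Qed.

Definition Psi (i : 'I_n) : {ffun 'I_N -> K} :=
  [ffun r : 'I_N => ((r : nat) == (p ^ (n - i.+1))%N)%:R].

Lemma p_gt1 : (1 < p)%N.
Proof. exact/prime_gt1/(pcharf_prime hp). Qed.

Lemma pm_lt (i : 'I_n) : (p ^ (n - i.+1) < N)%N.
Proof. by rewrite ltn_exp2l ?p_gt1 //; move: (ltn_ord i); lia. Qed.

Lemma actPsi (i : 'I_n) x :
  adiv_act (@T K L p n y) (Psi i) x = Tn p n y (p ^ (n - i.+1)) x.
Proof.
rewrite adiv_actE (bigD1 (Ordinal (pm_lt i))) //= big1 => [|r hr].
  by rewrite ffunE eqxx scale1r addr0.
rewrite ffunE.
have -> : ((r : nat) == (p ^ (n - i.+1))%N) = false.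
  by apply/negP => /eqP e; move: hr; rewrite -val_eqE /= e eqxx.
by rewrite scale0r.
Qed.

Lemma frakE (s : nat) : (s < N)%N -> frak_b p (fun _ : 'I_n => b) s = b * s%:Z.
Proof.
move=> hs; rewrite /frak_b.
have hsum : (\sum_(i < n) digit p i s * p ^ i)%N = s by rewrite digits_sum ?p_gt1 // modn_small.
rewrite -{2}hsum (big_morph Posz PoszD (erefl (Posz 0))) mulr_sumr [RHS](reindex_inj rev_ord_inj) /=.
by apply: eq_bigr => i _; rewrite PoszM mulrC.
Qed.

Lemma scaf : scaffold_infty p n vK vL (adiv_act (@T K L p n y)) (fun _ : 'I_n => b).
Proof.
split; first by move=> _.
exists lam, Psi; split.
- by move=> t; split; [exact: lam_nz | exact: vL_lam].
- move=> t1 t2; rewrite eqz_mod_dvd => /dvdzP [q hq].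
  have e : lam t1 = y ^+ jf t2 * (pi ^ (q + kf t2))%:A.
    apply: lam_char; first exact: jf_lt.
    have := lam_eq t2; rewrite mulrDr; lia.
  exists (pi ^ (q + kf t2) / pi ^ kf t2).
  have hk : pi ^ kf t2 != 0 by rewrite expfz_neq0.
  have hY : y ^+ jf t2 != 0 by rewrite expf_neq0.
  rewrite e /lam invfM mulrACA divff // mul1r.
  by rewrite -!in_algE fmorph_div.
- move=> i; rewrite actPsi (T1 hp Xb).
  have -> : (p ^ (n - i.+1) == 0)%N = false.
    by apply/negbTE; rewrite -lt0n expn_gt0 prime_gt0 // (pcharf_prime hp).
  by [].
- move=> i t.
  set m := (n - i.+1)%N; set d := digit p m (jf t).
  exists (if (1 <= d)%N then d%:R else 1).
  have hpL : p \in [pchar L] by rewrite pchar_lalg.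
  have Tlam : adiv_act (@T K L p n y) (Psi i) (lam t) =
               (pi ^ kf t) *: (y ^+ (jf t - p ^ m) *+ 'C(jf t, p ^ m)).
    by rewrite actPsi /lam mulr_algr linearZ /= (Tbasis Xb _ (Ordinal (jf_lt t))).
  have Cd : ('C(jf t, p ^ m))%:R = d%:R :> L.
    by rewrite (bin_lucas_digit hpL) /d /digit (GRing.natr_mod_pchar hpL).
  have dlt : (d < p)%N by rewrite ltn_pmod // ltnW // p_gt1.
  have dnz : (1 <= d)%N -> (d%:R : K) != 0.
    move=> hd; rewrite -(dvdn_pcharf hp); apply/negP => /dvdn_leq.
    by move=> /(_ hd); rewrite leqNgt dlt.
  split.
  + by case: ifP => hd; [exact: dnz | exact: oner_neq0].
  + by case: ifP => hd; [exact: vK_nat hp hvK (dnz hd) | exact: v1 hvK].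
  + move=> s hs hfr.
    have sj : s = jf t.
      apply/esym/jf_char => //; move: hfr; rewrite frakE // eqz_mod_dvd.
      by rewrite opprK addrC.
    rewrite sj -/d; case: (leqP 1 d) => hd.
    * have hq : (0 < jf t %/ p ^ m)%N.
        move: hd; rewrite /d /digit; case: (jf t %/ p ^ m)%N => //.
        by rewrite mod0n.
      have hpm : (p ^ m <= jf t)%N.
        by rewrite -divn_gt0 // expn_gt0 prime_gt0 // (pcharf_prime hp).
      have hl : lam (t + (p ^ m)%N%:Z * b) = y ^+ (jf t - p ^ m) * (pi ^ kf t)%:A.
        apply: lam_char; first by move: (jf_lt t); lia.
        rewrite -(lam_eq t) -(subzn hpm); ring.
      rewrite Tlam hl -mulr_natr Cd scaler_nat mulr_algr -scalerAr.
      by congr (_ *: _); apply: mulrC.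
    * have d0 : d = 0%N by move: hd; lia.
      by rewrite Tlam -mulr_natr Cd d0 mulr0 scaler0.
Qed.
End Scaf.

Unset Implicit Arguments.

Theorem theorem5p1 (p : nat) (K : fieldType) (L : fieldExtType K) (n : nat)
    (vK : K -> int) (vL : L -> int) (b : int) :
    p \in [pchar K] ->
    normalized_dval vK -> dval_complete vK ->
    normalized_dval vL ->
    (forall x : K, x != 0 -> vL x%:A = (p ^ n)%:Z * vK x) ->
    \dim {:L} = (p ^ n)%N ->
    purely_inseparable 1%VS {:L} ->
    0 < b < (p ^ n)%:Z -> coprimez b p%:Z ->
  exists T : 'I_(p ^ n) -> 'End(L),
    adiv_hopf_galois T /\
    scaffold_infty p n vK vL (adiv_act T) (fun _ : 'I_n => b).
Proof.
move=> hp hvK _ hvL hKL hdim hins _ hcp.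
have [pi hpi0 hvpi] : exists2 pi : K, pi != 0 & vK pi = 1.
  by case: hvK => _ _ hs; apply: hs.
have [y hy0 hvy] : exists2 y : L, y != 0 & vL y = - b.
  by case: hvL => _ _ hs; apply: hs.
have hcop : coprimez b (p ^ n)%N%:Z.
  move: hcp; rewrite !coprimezE !absz_nat => h; exact: coprimeXr.
have hfree := y_free hvL hKL hy0 hvy hcop.
have Xb : basis_of fullv [tuple y ^+ (i : nat) | i < (p ^ n)%N].
  by rewrite basisEfree hfree subvf /= size_map size_enum_ord hdim.
have [c yN] := exists_yN hp hins hdim Xb.
have [[u v] /= huv] := coprimezP _ _ hcop.
have hu : ((p ^ n)%N%:Z %| u * b - 1)%Z.
  by apply/dvdzP; exists (- v); rewrite -huv; ring.
exists (@T K L p n y); split.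
  exact: T_hopf_galois hp yN Xb.
exact: scaf hp hvK hvL hKL Xb hy0 hvy hpi0 hvpi hcp hcop hu.
Qed.
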